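(* Let $n\geq 4$, let $S$ be the set of all $3$-cycles in $S_n$, and let $CAG_n=\mathrm{Cay}(A_n,S)$. Then $$\mathrm{Aut}(CAG_n)\supseteq (R(A_n)\rtimes \mathrm{Inn}(S_n))\rtimes \mathbb{Z}_2\cong (A_n\rtimes S_n)\rtimes \mathbb{Z}_2,$$ where $R(A_n)$ is the right regular representation of $A_n$, $\mathrm{Inn}(S_n)$ is the inner automorphism group of $S_n$ (acting on $A_n$ by conjugation), and $\mathbb{Z}_2=\langle h\rangle$ with $h$ the map $\alpha\mapsto\alpha^{-1}$ for all $\alpha\in A_n$.
   Context: For a finite group $\Gamma$ and a subset $T\subseteq\Gamma$ with $e\notin T$ and $T=T^{-1}$, the Cayley graph $\mathrm{Cay}(\Gamma,T)$ is the undirected graph with vertex set $\Gamma$ and edge set $\{\{\gamma,t\gamma\}\mid \gamma\in\Gamma, t\in T\}$. The right regular representation is $R(\Gamma)=\{r_\gamma: x\mapsto x\gamma\mid\gamma\in\Gamma\}$. *)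

(* Defs.v *)
From mathcomp Require Import all_boot all_fingroup all_solvable.
Set Implicit Arguments.
Unset Strict Implicit.
Unset Printing Implicit Defensive.
Local Open Scope group_scope.

Section CAG.
Variable n : nat.

Definition is_3cycle (s : {perm 'I_n}) : bool :=
  [exists a, exists b, exists c,
    [&& a != b, b != c, a != c, s a == b, s b == c, s c == a &
        [forall x, (x \notin [:: a; b; c]) ==> (s x == x)]]].

Definition three_cycles : {set {perm 'I_n}} := [set s | is_3cycle s].

Definition An : finGroupType := subg_of (Alt_group 'I_n).

(* Cay(A_n, S): x ~ y iff y = t x for some t in S, i.e. y x^-1 in S. *)
Definition cag_adj (x y : An) : bool :=
  (sgval y * (sgval x)^-1) \in three_cycles.

Definition cag_aut : {set {perm An}} :=
  [set f : {perm An} | [forall x, forall y, cag_adj x y == cag_adj (f x) (f y)]].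

Definition rreg (g : An) : {perm An} := perm (mulIg g).
Definition Rreg : {set {perm An}} := [set rreg g | g : An].

Definition conjA_fun (s : {perm 'I_n}) (x : An) : An := subg (Alt_group 'I_n) (sgval x ^ s).

Lemma conjA_in (s : {perm 'I_n}) (x : An) : sgval x ^ s \in Alt 'I_n.
Proof.
have := subgP x; rewrite !Alt_even odd_permJ; done.
Qed.

Lemma conjA_inj (s : {perm 'I_n}) : injective (conjA_fun s).
Proof.
move=> x y /(congr1 sgval); rewrite /conjA_fun !subgK ?conjA_in //.
by move/conjg_inj/subg_inj.
Qed.

Definition conjA (s : {perm 'I_n}) : {perm An} := perm (@conjA_inj s).
Definition Inn_on_An : {set {perm An}} := [set conjA s | s : {perm 'I_n}].

Definition hinv : {perm An} := perm (@invg_inj An).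

End CAG.

(* Main.v *)
Require Import Defs.
From mathcomp Require Import all_boot all_fingroup all_solvable.
Set Implicit Arguments. Unset Strict Implicit. Unset Printing Implicit Defensive.
Local Open Scope group_scope.

Section S.
Variable n : nat.
Local Notation An := (An n).

Lemma rregE (g x : An) : rreg g x = x * g.
Proof. by rewrite /rreg permE. Qed.
Lemma conjAE s (x : An) : sgval (conjA s x) = sgval x ^ s.
Proof. by rewrite /conjA permE /conjA_fun subgK // conjA_in. Qed.
Lemma hinvE (x : An) : hinv n x = x^-1.
Proof. by rewrite /hinv permE. Qed.

Lemma rregM : {in [set: An] &, {morph (@rreg n) : g h / g * h}}.
Proof. by move=> g h _ _; apply/permP => x; rewrite permM !rregE mulgA. Qed.
Canonical rreg_m := Morphism rregM.
Lemma conjAM : {in [set: {perm 'I_n}] &, {morph (@conjA n) : g h / g * h}}.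
Proof. by move=> g h _ _; apply/permP => x; apply/subg_inj; rewrite permM !conjAE conjgM. Qed.
Canonical conjA_m := Morphism conjAM.

Lemma RregE : Rreg n = rreg_m @* [set: An].
Proof. rewrite morphimEdom; by apply/setP => y; apply/imsetP/imsetP => -[g _ ->]; exists g; rewrite ?inE. Qed.
Lemma InnE : Inn_on_An n = conjA_m @* [set: {perm 'I_n}].
Proof. rewrite morphimEdom; by apply/setP => y; apply/imsetP/imsetP => -[g _ ->]; exists g; rewrite ?inE. Qed.

Lemma rreg_injm : 'injm (rreg_m).
Proof.
apply/injmP => g h _ _ E; have := congr1 (fun p : {perm An} => p 1) E.
by rewrite !rregE !mul1g.
Qed.

Lemma three_cycleJ (t s : {perm 'I_n}) : t \in three_cycles n -> t ^ s \in three_cycles n.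
Proof.
rewrite !inE => /existsP[a /existsP[b /existsP[c /and5P[ab bc ac ta /and3P[tb tc /forallP fx]]]]].
apply/existsP; exists (s a); apply/existsP; exists (s b); apply/existsP; exists (s c).
rewrite !permJ !(inj_eq (@perm_inj _ s)) ab bc ac (eqP ta) (eqP tb) (eqP tc) !eqxx /=.
apply/forallP => x; apply/implyP => hx.
have hx' : s^-1 x \notin [:: a; b; c].
  move: hx; rewrite -{1}(permKV s x) -[[:: s a; s b; s c]]/(map s [:: a; b; c]).
  by rewrite (mem_map (@perm_inj _ s)).
move/implyP: (fx (s^-1 x)) => /(_ hx') /eqP e.
by rewrite -{1}(permKV s x) permJ e permKV.
Qed.

Lemma three_cycleJ_eq (t s : {perm 'I_n}) : (t ^ s \in three_cycles n) = (t \in three_cycles n).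
Proof.
apply/idP/idP => [|]; last exact: three_cycleJ.
by move/(three_cycleJ (s^-1)); rewrite conjgK.
Qed.

Lemma three_cycleV (t : {perm 'I_n}) : t \in three_cycles n -> t^-1 \in three_cycles n.
Proof.
rewrite !inE => /existsP[a /existsP[b /existsP[c /and5P[ab bc ac ta /and3P[tb tc /forallP fx]]]]].
apply/existsP; exists a; apply/existsP; exists c; apply/existsP; exists b.
rewrite ac (eq_sym c b) bc ab.
have -> : t^-1 a = c by rewrite -(eqP tc) permK.
have -> : t^-1 c = b by rewrite -(eqP tb) permK.
have -> : t^-1 b = a by rewrite -(eqP ta) permK.
rewrite !eqxx /=.
apply/forallP => x; apply/implyP => hx.
have hx' : x \notin [:: a; b; c].
  by move: hx; rewrite !inE; apply: contra; case/or3P=> ->; rewrite ?orbT.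
move/implyP: (fx x) => /(_ hx') /eqP e.
by rewrite -{1}e permK.
Qed.

Lemma three_cycleV_eq (t : {perm 'I_n}) : (t^-1 \in three_cycles n) = (t \in three_cycles n).
Proof. by apply/idP/idP => [/three_cycleV|/three_cycleV//]; rewrite invgK. Qed.

Lemma sgM (x y : An) : sgval (x * y) = sgval x * sgval y. Proof. by []. Qed.
Lemma sgV (x : An) : sgval (x^-1) = (sgval x)^-1. Proof. by []. Qed.
Lemma sg1 : sgval (1 : An) = 1. Proof. by []. Qed.

Lemma cag_aut_group : group_set (cag_aut n).
Proof.
apply/group_setP; split.
  by rewrite inE; apply/forallP=> x; apply/forallP=> y; rewrite !perm1.
move=> f g; rewrite !inE => /forallP hf /forallP hg.
apply/forallP=> x; apply/forallP=> y; rewrite !permM.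
by rewrite (eqP (forallP (hf x) y)) (eqP (forallP (hg (f x)) (f y))).
Qed.
Canonical cag_aut_grp := Group cag_aut_group.

Lemma rreg_aut g : rreg g \in cag_aut n.
Proof.
rewrite inE; apply/forallP=> x; apply/forallP=> y; rewrite /cag_adj !rregE !sgM.
by rewrite invMg mulgA mulgK.
Qed.

Lemma conjA_aut s : conjA s \in cag_aut n.
Proof.
rewrite inE; apply/forallP=> x; apply/forallP=> y; rewrite /cag_adj !conjAE.
by rewrite -conjVg -conjMg three_cycleJ_eq.
Qed.

Lemma hinv_aut : hinv n \in cag_aut n.
Proof.
rewrite inE; apply/forallP=> x; apply/forallP=> y; rewrite /cag_adj !hinvE !sgV.
set X := sgval x; set Y := sgval y.
have -> : Y^-1 * X^-1^-1 = ((Y * X^-1) ^ Y)^-1.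
  by rewrite conjgE !mulgA mulVg mul1g invMg !invgK.
by rewrite three_cycleV_eq three_cycleJ_eq.
Qed.

Definition c3 (a b c : 'I_n) : {perm 'I_n} := tperm a b * tperm a c.

Lemma c3_alt a b c : a != b -> a != c -> c3 a b c \in Alt 'I_n.
Proof. by move=> ab ac; rewrite Alt_even /c3 odd_permM !odd_tperm ab ac. Qed.

Lemma c3a a b c : a != b -> b != c -> c3 a b c a = b.
Proof. by move=> ab bc; rewrite /c3 permM tpermL tpermD // eq_sym. Qed.
Lemma c3b a b c : a != b -> c3 a b c b = c.
Proof. by move=> ab; rewrite /c3 permM tpermR tpermL. Qed.
Lemma c3x a b c x : x \notin [:: a; b; c] -> c3 a b c x = x.
Proof.
rewrite !inE => /norP[xa /norP[xb xc]].
by rewrite /c3 permM !tpermD // eq_sym.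
Qed.

Lemma comm_supp (u : {perm 'I_n}) a b c :
  a != b -> b != c -> a != c -> commute (c3 a b c) u -> u a \in [:: a; b; c].
Proof.
move=> ab bc ac cm; apply/negPn/negP => hu.
have e1 : c3 a b c (u a) = u a by rewrite c3x.
have : u (c3 a b c a) = c3 a b c (u a) by rewrite -!permM cm.
by rewrite c3a // e1 => /perm_inj/eqP; rewrite eq_sym (negbTE ab).
Qed.

Lemma fix4 (u : {perm 'I_n}) p q r w :
  p != q -> p != r -> p != w -> q != r -> q != w -> r != w ->
  (forall a b c, a != b -> b != c -> a != c -> commute (c3 a b c) u) -> u p = p.
Proof.
move=> pq pr pw qr qw rw cm.
have h1 := comm_supp pq qr pr (cm _ _ _ pq qr pr).
have h2 := comm_supp pq qw pw (cm _ _ _ pq qw pw).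
have h3 := comm_supp pr rw pw (cm _ _ _ pr rw pw).
move: h1 h2 h3; rewrite !inE.
case/or3P => /eqP -> //.
  by rewrite !eqxx (eq_sym q p) (negbTE pq) (negbTE qr) (negbTE qw).
by rewrite (eq_sym r p) (negbTE pr) (eq_sym r q) (negbTE qr) (negbTE rw).
Qed.

Lemma conjA1_triv (hn : 4 <= n) (u : {perm 'I_n}) : conjA u = 1 -> u = 1.
Proof.
move=> E.
have cm a b c : a != b -> b != c -> a != c -> commute (c3 a b c) u.
  move=> ab bc ac; apply/commgP/conjg_fixP.
  have := congr1 (fun p : {perm An} => sgval (p (subg (Alt_group 'I_n) (c3 a b c)))) E.
  by rewrite /= conjAE perm1 subgK // c3_alt.
have l0 : 0 < n by apply: leq_trans hn.
have l1 : 1 < n by apply: leq_trans hn.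
have l2 : 2 < n by apply: leq_trans hn.
have l3 : 3 < n by apply: leq_trans hn.
set o0 := Ordinal l0; set o1 := Ordinal l1; set o2 := Ordinal l2; set o3 := Ordinal l3.
have d01 : o0 != o1 by []. have d02 : o0 != o2 by []. have d03 : o0 != o3 by [].
have d12 : o1 != o2 by []. have d13 : o1 != o3 by []. have d23 : o2 != o3 by [].
apply/permP => x; rewrite perm1.
case hx: (x \in [:: o0; o1; o2]).
  move: hx; rewrite !inE => /or3P[] /eqP ->.
  - exact: (fix4 d01 d02 d03 d12 d13 d23 cm).
  - by apply: (fix4 _ d12 d13 d02 d03 d23 cm); rewrite eq_sym.
  - by apply: (fix4 _ _ d23 d01 d13 d03 cm); rewrite eq_sym.
move: hx; rewrite !inE => /negbT /norP[x0 /norP[x1 x2]].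
exact: (fix4 x0 x1 x2 d01 d02 d12 cm).
Qed.

Lemma conjA_injm (hn : 4 <= n) : 'injm (conjA_m).
Proof.
apply/injmP => s t _ _ E.
have : conjA_m (s * t^-1) = 1 by rewrite morphM ?inE // morphV ?inE //= E mulgV.
by move/(conjA1_triv hn)/eqP; rewrite mulg_eq1 => /eqP ->; rewrite invgK.
Qed.

Lemma An_nonab (hn : 4 <= n) : exists x y : An, x * y != y * x.
Proof.
have l0 : 0 < n by apply: leq_trans hn.
have l1 : 1 < n by apply: leq_trans hn.
have l2 : 2 < n by apply: leq_trans hn.
have l3 : 3 < n by apply: leq_trans hn.
set o0 := Ordinal l0; set o1 := Ordinal l1; set o2 := Ordinal l2; set o3 := Ordinal l3.
have d01 : o0 != o1 by []. have d02 : o0 != o2 by []. have d03 : o0 != o3 by [].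
have d12 : o1 != o2 by []. have d13 : o1 != o3 by []. have d23 : o2 != o3 by [].
exists (subg (Alt_group 'I_n) (c3 o0 o1 o2)), (subg (Alt_group 'I_n) (c3 o0 o1 o3)).
apply/eqP => /(congr1 (fun x : An => sgval x o0)).
rewrite !sgM !subgK ?c3_alt // (permM (c3 o0 o1 o2)) (permM (c3 o0 o1 o3)) !c3a // !c3b //.

Qed.

Lemma hinv2 : hinv n * hinv n = 1.
Proof. by apply/permP => x; rewrite permM perm1 !hinvE invgK. Qed.

Lemma hinvV : (hinv n)^-1 = hinv n.
Proof. by apply/eqP; rewrite eq_invg_mul hinv2. Qed.

Lemma rregJ (g : An) (s : {perm 'I_n}) : rreg g ^ conjA s = rreg (conjA s g).
Proof.
apply/permP => x; rewrite -(permKV (conjA s) x) permJ !rregE.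
apply/subg_inj; rewrite !sgM !conjAE sgM; exact: conjMg.
Qed.

Lemma hconj (g : An) (s : {perm 'I_n}) : (rreg g * conjA s) ^ hinv n = rreg g^-1 * conjA (sgval g * s).
Proof.
apply/permP => x; rewrite conjgE hinvV !permM !hinvE !rregE.
apply/subg_inj; rewrite sgV !conjAE !sgM !sgV conjgM -conjVg invMg invgK.
by congr (_ ^ _); rewrite conjgE !mulgA -(mulgA _ _^-1) mulVg mulg1.
Qed.
End S.

Lemma memN (gT : finGroupType) (A : {set gT}) y :
  (forall x, x \in A -> x ^ y \in A) -> y \in 'N(A).
Proof.
move=> hA; apply/normP; apply/eqP; rewrite eqEcard cardJg leqnn andbT.
by apply/subsetP => z /imsetP[x Ax ->]; exact: hA.
Qed.

Theorem theorem2p2 (n : nat) (hn : 4 <= n) :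
  let R := Rreg n in
  let C := Inn_on_An n in
  let K := <<R :|: C>> in
  let H := <<K :|: <[hinv n]> >> in
  H \subset cag_aut n /\
  [/\ R ><| C = K,
      K ><| <[hinv n]> = H,
      R \isog 'Alt_('I_n),
      C \isog 'Sym_('I_n) &
      #[hinv n] = 2].
Proof.
move=> R C K H; subst R C K H.
rewrite RregE InnE.
set Rg := rreg_m n @* _; set Cg := conjA_m n @* _.
have nRC : Cg \subset 'N(Rg).
  apply/subsetP => c /morphimP[s _ _ ->]; apply: memN => p /morphimP[g _ _ ->].
  by rewrite /= rregJ; apply/morphimP; exists (conjA s g); rewrite ?inE.
have tiRC : Rg :&: Cg = 1.
  apply/trivgP/subsetP => p; rewrite inE => /andP[/morphimP[g _ _ ->] /morphimP[s _ _ E]].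
  have := congr1 (fun q : {perm An n} => sgval (q 1)) E.
  rewrite /= rregE mul1g conjAE sg1 conj1g => e.
  have -> : g = 1 by apply: subg_inj; rewrite e.
  by rewrite morph1 inE.
have eK : Rg ><| Cg = Rg <*> Cg := sdprodEY nRC tiRC.
have KE : Rg <*> Cg = Rg * Cg := norm_joinEr nRC.
have oneK : 1 \in Rg * Cg by rewrite -KE group1.
have hK : hinv n \notin Rg * Cg.
  apply/negP => /mulsgP[r c /morphimP[g _ _ ->] /morphimP[s _ _ ->] E].
  have E1 := congr1 (fun q : {perm An n} => sgval (q 1)) E.
  rewrite /= hinvE invg1 permM rregE mul1g conjAE sg1 in E1.
  have g1 : g = 1.
    apply: subg_inj; rewrite sg1.
    by apply: (@conjg_inj _ s); rewrite -E1 conj1g.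
  subst g.
  have Ex (x : An n) : (sgval x)^-1 = sgval x ^ s.
    have := congr1 (fun q : {perm An n} => sgval (q x)) E.
    by rewrite /= hinvE permM rregE mulg1 conjAE sgV.
  have [x [y nxy]] := An_nonab hn; apply: (negP nxy); apply/eqP.
  apply: subg_inj; rewrite !sgM.
  by apply: invg_inj; rewrite [RHS]invMg -sgM Ex sgM conjMg -!Ex.
have nKh : <[hinv n]> \subset 'N(Rg <*> Cg).
  rewrite cycle_subG; apply: memN => k; rewrite KE => /mulsgP[r0 c0 /morphimP[g _ _ ->] /morphimP[s _ _ ->] ->].
  rewrite /= hconj; apply: mem_mulg; apply/morphimP.
    by exists g^-1; rewrite ?inE.
  by exists (sgval g * s); rewrite ?inE.
have ord : #[hinv n] = 2.
  have d : #[hinv n] %| 2 by rewrite order_dvdn expgS expg1 hinv2.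
  have h1 : #[hinv n] != 1%N.
    by rewrite order_eq1; apply: contraNneq hK => ->.
  have := dvdn_leq (isT : 0 < 2) d; have := order_gt0 (hinv n).
  by move: d h1; case: #[_] => [|[|[|]]].
have ti2 : (Rg <*> Cg) :&: <[hinv n]> = 1.
  rewrite setIC prime_TIg // -?orderE ?ord // cycle_subG; apply: contra hK => hk; rewrite -KE; exact: hk.
split.
  rewrite gen_subG subUset cycle_subG hinv_aut andbT gen_subG subUset.
  by apply/andP; split; apply/subsetP => p /morphimP[x _ _ ->];
    [exact: rreg_aut | exact: conjA_aut].
split => //.
- exact: (sdprodEY nKh ti2).
- rewrite isog_sym; apply: isog_trans (isog_subg _) _.
  exact: (sub_isog (subxx _) (rreg_injm n)).
- rewrite isog_sym; apply: (sub_isog (subxx _) (conjA_injm hn)).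
Qed.
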